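(* Let $N$ be an indecomposable $n$-dimensional two-step nilpotent Lie algebra over $\mathbb{C}$, and let its center have dimension $p$. Then \[ 1 \le p \le n + \tfrac{1}{2} - \sqrt{2n + \tfrac{1}{4}}. \]
   Context: A two-step nilpotent Lie algebra is a non-abelian Lie algebra $N$ with $[N,[N,N]]=0$. A Lie algebra is decomposable if it is a direct sum of two nonzero ideals, and indecomposable otherwise. *)

(* Defs.v *)
From HB Require Import structures.
From mathcomp Require Import all_boot all_order all_algebra.
From mathcomp Require Import reals realfun complex.
Set Implicit Arguments. Unset Strict Implicit. Unset Printing Implicit Defensive.
Import Order.TTheory GRing.Theory Num.Theory.
Local Open Scope ring_scope.

Section Lie.
Variables (F : fieldType) (V : vectType F).

Definition lie_bracket (br : V -> V -> V) : Prop :=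
  [/\ (forall (a : F) x y z, br (a *: x + y) z = a *: br x z + br y z),
      (forall (a : F) x y z, br z (a *: x + y) = a *: br z x + br z y),
      (forall x, br x x = 0) &
      (forall x y z, br x (br y z) + br y (br z x) + br z (br x y) = 0)].

Definition lie_ideal (br : V -> V -> V) (I : {vspace V}) : Prop :=
  forall x y, y \in I -> br x y \in I.

Definition lie_decomposable (br : V -> V -> V) : Prop :=
  exists I J : {vspace V},
    [/\ lie_ideal br I, lie_ideal br J, I != 0%VS, J != 0%VS &
        ((I + J)%VS = fullv /\ (I :&: J)%VS = 0%VS)].

Definition lie_indecomposable (br : V -> V -> V) : Prop :=
  ~ lie_decomposable br.

Definition two_step_nilpotent (br : V -> V -> V) : Prop :=
  (exists x y, br x y != 0) /\ (forall x y z, br x (br y z) = 0).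

Definition lie_center_is (br : V -> V -> V) (Z : {vspace V}) : Prop :=
  forall x, x \in Z <-> (forall y, br x y = 0).

End Lie.

(* Main.v *)
Require Import Defs.
From HB Require Import structures.
From mathcomp Require Import all_boot all_order all_algebra.
From mathcomp Require Import reals realfun complex.
From mathcomp Require Import zify.
Import Order.TTheory GRing.Theory Num.Theory.
Set Implicit Arguments. Unset Strict Implicit.
Local Open Scope ring_scope.

Fixpoint pairs (m : nat) : seq (nat * nat) :=
  if m is m'.+1 then pairs m' ++ [seq (i, m') | i <- iota 0 m'] else [::].

Lemma size_pairs m : (2 * size (pairs m) = m * m.-1)%N.
Proof.
elim: m => [//|m IH] /=; rewrite size_cat size_map size_iota.
case: m IH => [//|m] /= IH; lia.
Qed.

Lemma mem_pairs m i j : (i < j)%N -> (j < m)%N -> (i, j) \in pairs m.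
Proof.
elim: m => [//|m IH] lt_ij /=; rewrite ltnS leq_eqVlt => /orP[/eqP Ej|lt_jm].
  rewrite mem_cat; apply/orP; right; apply/mapP; exists i; last by rewrite Ej.
  by rewrite mem_iota add0n -Ej.
by rewrite mem_cat (IH lt_ij lt_jm).
Qed.

Section Gen.
Variables (F : fieldType) (V : vectType F) (br : V -> V -> V).
Hypothesis Hbr : lie_bracket br.

Lemma br0l y : br 0 y = 0.
Proof.
case: Hbr => H1 _ _ _; have h := H1 1 0 0 y.
rewrite scaler0 addr0 scale1r in h.
by move/(congr1 (fun t => t - br 0 y)): h; rewrite subrr addrK.
Qed.
Lemma br0r y : br y 0 = 0.
Proof.
case: Hbr => _ H1 _ _; have h := H1 1 0 0 y.
rewrite scaler0 addr0 scale1r in h.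
by move/(congr1 (fun t => t - br y 0)): h; rewrite subrr addrK.
Qed.
Lemma brDl x y z : br (x + y) z = br x z + br y z.
Proof. by case: Hbr => H1 _ _ _; have := H1 1 x y z; rewrite !scale1r. Qed.
Lemma brDr x y z : br z (x + y) = br z x + br z y.
Proof. by case: Hbr => _ H1 _ _; have := H1 1 x y z; rewrite !scale1r. Qed.
Lemma brZl a x z : br (a *: x) z = a *: br x z.
Proof. by case: Hbr => H1 _ _ _; have := H1 a x 0 z; rewrite !addr0 br0l addr0. Qed.
Lemma brZr a x z : br z (a *: x) = a *: br z x.
Proof. by case: Hbr => _ H1 _ _; have := H1 a x 0 z; rewrite !addr0 br0r addr0. Qed.
Lemma brN x y : br x y = - br y x.
Proof.
case: Hbr => _ _ H3 _; have := H3 (x + y).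
rewrite brDl !brDr !H3 add0r addr0 => /eqP; rewrite addr_eq0 => /eqP.
by [].
Qed.
Lemma br_suml I (r : seq I) (v : I -> V) y :
  br (\sum_(i <- r) v i) y = \sum_(i <- r) br (v i) y.
Proof. exact: (big_morph (fun x => br x y) (fun a b => brDl a b y) (br0l y)). Qed.
Lemma br_sumr I (r : seq I) (v : I -> V) y :
  br y (\sum_(i <- r) v i) = \sum_(i <- r) br y (v i).
Proof. exact: (big_morph (fun x => br y x) (fun a b => brDr a b y) (br0r y)). Qed.

End Gen.

Lemma key (F : fieldType) (V : vectType F) (br : V -> V -> V) (Z : {vspace V}) :
  lie_bracket br -> two_step_nilpotent br -> lie_indecomposable br ->
  lie_center_is br Z ->
  (0 < \dim Z)%N /\
  (2 * \dim Z <= (\dim (fullv : {vspace V}) - \dim Z) * (\dim (fullv : {vspace V}) - \dim Z).-1)%N.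
Proof.
move=> Hbr [[x0 [y0 Hne]] H2] Hind Hcen.
have Hbr' := Hbr; case: Hbr' => _ _ H3 _.
pose C := (Z^C)%VS. pose m := \dim C. pose X := vbasis C.
pose D := <<[seq br X`_(ij.1) X`_(ij.2) | ij <- pairs m]>>%VS.
have hc z : z \in Z -> forall y, br z y = 0 by move/Hcen.
have hc' z : z \in Z -> forall y, br y z = 0.
  by move=> Hz y; rewrite (brN Hbr) (hc z Hz) oppr0.
have brC c c' : c \in C -> c' \in C -> br c c' \in D.
  move=> Hc Hc'; rewrite (coord_vbasis Hc) (coord_vbasis Hc') (br_suml Hbr).
  apply: memv_suml => i _; rewrite (brZl Hbr) (br_sumr Hbr) memvZ //.
  apply: memv_suml => j _; rewrite (brZr Hbr) memvZ //.
  have [lt|gt|eq] := ltngtP i j.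
  - by apply: memv_span; apply/mapP; exists (val i, val j); first exact: mem_pairs lt (ltn_ord j).
  - by rewrite (brN Hbr) memvN; apply: memv_span; apply/mapP; exists (val j, val i); first exact: mem_pairs gt (ltn_ord i).

  - by have -> : i = j := val_inj eq; rewrite H3 mem0v.
have brall x y : br x y \in D.
  have Hx : x \in (Z + C)%VS by rewrite addv_complf memvf.
  have Hy : y \in (Z + C)%VS by rewrite addv_complf memvf.
  case/memv_addP: Hx => zx Hzx [cx Hcx ->].
  case/memv_addP: Hy => zy Hzy [cy Hcy ->].
  by rewrite (brDl Hbr) !(brDr Hbr) !(hc zx) // !(hc' zy) // !add0r brC.
have DZ x y : br x y \in Z.
  by apply/Hcen => w; rewrite (brN Hbr) H2 oppr0.
have ZD : (Z <= D)%VS.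
  apply/subvP => z Hz; case: (boolP (z \in D)) => // zD; exfalso; apply: Hind.
  have z0 : z != 0 by apply: contra zD => /eqP ->; exact: mem0v.
  pose K := ((D + <[z]>)^C)%VS.
  exists <[z]>%VS, (D + K)%VS; split.
  - move=> x y /vlineP [k ->]; by rewrite (brZr Hbr) (hc' z Hz) scaler0 mem0v.
  - move=> x y _; apply: (subvP (addvSl D K)); exact: brall.
  - by rewrite -dimv_eq0 dim_vline z0.
  - apply/eqP => J0; have : br x0 y0 \in (D + K)%VS.
      by apply: (subvP (addvSl D K)); exact: brall.
    by rewrite J0 memv0 (negPf Hne).
  split; first by rewrite addvA (addvC <[z]>%VS D) addv_complf.
  have h1 := dimv_sum_cap <[z]>%VS (D + K)%VS.
  rewrite addvA (addvC <[z]>%VS D) addv_complf dim_vline z0 in h1.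
  have h2 := dimv_sum_cap (D + <[z]>)%VS K.
  rewrite addv_complf capv_compl dimv0 in h2.
  have h3 := (dimv_add_leqif D K).1.
  have h4 : (\dim D < \dim (D + <[z]>))%N.
    rewrite (ltn_leqif (dimv_leqif_eq (addvSl D <[z]>%VS))).
    apply: contra zD => /eqP ->; exact: (subvP (addvSr D <[z]>%VS) z (memv_line z)).
  apply/eqP; rewrite -dimv_eq0; apply/eqP; move: h1 h2 h3 h4 => /=; lia.
split.
  rewrite lt0n dimv_eq0; apply/eqP => Z0; move: (DZ x0 y0).
  by rewrite Z0 memv0 (negPf Hne).
have := dimvS ZD; have := dim_span [seq br X`_(ij.1) X`_(ij.2) | ij <- pairs m].
rewrite size_map; have := size_pairs m; have : m = (\dim (fullv : {vspace V}) - \dim Z)%N by rewrite /m /C dimv_compl.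
move=> hm hs hd hzd; rewrite -hm -hs; rewrite /D in hzd; lia.
Qed.
From mathcomp Require Import ring lra.

Theorem proposition2 (R : realType) (N : vectType R[i]) (br : N -> N -> N)
  (Z : {vspace N}) :
  lie_bracket br -> two_step_nilpotent br -> lie_indecomposable br ->
  lie_center_is br Z ->
  let n := \dim (fullv : {vspace N}) in
  let p := \dim Z in
  (1 <= p)%N /\
  (p%:R : R) <= n%:R + 1 / 2 - Num.sqrt (2 * n%:R + 1 / 4).
Proof.
move=> Hbr H2 Hind Hcen n p.
have [h1 h2] := key Hbr H2 Hind Hcen.
rewrite -/n -/p in h2.
split => //.
have hn : n = (p + (n - p))%N.
  case: (leqP p n) => hpn; first lia.
  by move: h2; rewrite (_ : (n - p)%N = 0%N); lia.
move: h2; set m := (n - p)%N => h2.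
have hnat : (2 * n <= m * m + m)%N.
  have gen k : (2 * p <= k * k.-1)%N -> (2 * (p + k) <= k * k + k)%N by case: k => [|k] /=; nia.
  by rewrite {1}hn; apply: gen.
have hR : (2 * n%:R : R) <= m%:R * m%:R + m%:R.
  by move: hnat; rewrite -(ler_nat R) natrD !natrM.
have hnR : (n%:R : R) = p%:R + m%:R by rewrite {1}hn natrD.
have hs : Num.sqrt (2 * n%:R + 1/4 : R) <= m%:R + 1/2.
  have hm0 : (0 : R) <= m%:R + 1/2 by apply: addr_ge0; [exact: ler0n | lra].
  rewrite -[X in _ <= X]ger0_norm // -sqrtr_sqr; apply: ler_wsqrtr.
  rewrite expr2; nra.
lra.
Qed.
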